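(* Let $D\ge1$, let $Q_D$ be the $D$-dimensional hypercube on $X=\{0,1\}^D$ with adjacency matrix $A$, and let $B$ be a symmetric $A$-like matrix. Then: (i) $B_{xx}=B_{yy}$ for all $x,y\in X$; (ii) if $x,z\in X$ satisfy $\partial(x,z)=2$ and $y,w$ are the two vertices adjacent to both $x$ and $z$, then $B_{xy}=B_{zw}$ and $B_{yz}=B_{wx}$.
   Context: $Q_D$ is the graph with vertex set $X=\{0,1\}^D$, two vertices adjacent iff they differ in exactly one coordinate; $\partial$ is the path-length distance (equal to the number of coordinates in which two vertices differ). Matrices are real with rows and columns indexed by $X$. A matrix $B$ is $A$-like if $BA=AB$ and $B_{xy}=0$ for all $x,y\in X$ that are neither equal nor adjacent. *)

(* Defs.v *)
From mathcomp Require Import all_boot all_order all_algebra.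
Set Implicit Arguments. Unset Strict Implicit. Unset Printing Implicit Defensive.
Import Order.TTheory GRing.Theory Num.Theory.
Local Open Scope ring_scope.

Definition vert (D : nat) := {ffun 'I_D -> bool}.

(* Hamming (= path-length) distance in Q_D. *)
Definition hdist (D : nat) (x y : vert D) : nat := #|[set i | x i != y i]|.

Definition adj (D : nat) (x y : vert D) : bool := hdist x y == 1%N.

Definition Xmat (R : Type) (D : nat) := vert D -> vert D -> R.

Definition adjA (R : nzRingType) (D : nat) : Xmat R D :=
  fun x y => if adj x y then 1 else 0.

Definition xmul (R : nzRingType) (D : nat) (M N : Xmat R D) : Xmat R D :=
  fun x z => \sum_(y : vert D) M x y * N y z.

Definition symmetric_mat (R : Type) (D : nat) (B : Xmat R D) : Prop :=
  forall x y, B x y = B y x.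

Definition A_like (R : nzRingType) (D : nat) (B : Xmat R D) : Prop :=
  (forall x z, xmul B (@adjA R D) x z = xmul (@adjA R D) B x z) /\
  (forall x y, x != y -> ~~ adj x y -> B x y = 0).

(* Main.v *)
Require Import Defs.
From mathcomp Require Import all_boot all_order all_algebra.
From mathcomp Require Import lra.
Set Implicit Arguments. Unset Strict Implicit. Unset Printing Implicit Defensive.
Import Order.TTheory GRing.Theory Num.Theory.

Section Cube.
Variable D : nat.
Implicit Types x y z u w : vert D.

Lemma ne_trans (a b c : bool) : (a != c) = (a != b) (+) (b != c).
Proof. by case: a; case: b; case: c. Qed.

Lemma adj_sym x y : adj x y = adj y x.
Proof.
rewrite /adj /hdist (_ : [set i | x i != y i] = [set i | y i != x i]) //.
by apply/setP => i; rewrite !inE eq_sym.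
Qed.

Lemma adjE x y : adj x y -> exists k, forall i, (x i != y i) = (i == k).
Proof.
move=> H1; have [k Hk] := cards1P (H1 : #|_| == 1%N); exists k => i.
by move/setP: Hk => /(_ i); rewrite !inE.
Qed.

Lemma eq_from_d x y u : (forall i, (x i != u i) = (x i != y i)) -> u = y.
Proof.
move=> H; apply/ffunP => i; move: (H i).
by case: (x i); case: (u i); case: (y i).
Qed.

Lemma hdist0 x z : hdist x z = 0%N -> x = z.
Proof.
move=> /eqP; rewrite cards_eq0 => /eqP H; apply/ffunP => i.
move/setP: H => /(_ i); rewrite !inE.
by case: (x i); case: (z i).
Qed.

Lemma two_step x y z : adj x y -> adj y z ->
  exists a b, (forall i, (x i != y i) = (i == a)) /\
              (forall i, (x i != z i) = (i == a) (+) (i == b)).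
Proof.
move=> /adjE [a Ha] /adjE [b Hb]; exists a, b; split => // i.
by rewrite (ne_trans _ (y i)) Ha Hb.
Qed.

Lemma two_step_dist x y z : adj x y -> adj y z ->
  (x = z) \/ hdist x z = 2%N.
Proof.
move=> Hxy Hyz; have [a [b [Ha Hb]]] := two_step Hxy Hyz.
case: (eqVneq a b) => [Eab|Nab].
  rewrite -Eab in Hb; left; apply/hdist0/eqP; rewrite cards_eq0; apply/eqP/setP => i.
  by rewrite !inE Hb addbb.
right; rewrite /hdist.
have -> : [set i | x i != z i] = [set a; b].
  apply/setP => i; rewrite !inE Hb.
  case: (eqVneq i a) => [->|]; first by rewrite (negPf Nab).
  by case: (i == b).
by rewrite cards2 Nab.
Qed.

Lemma no_tri x y z : adj x y -> adj y z -> ~~ adj x z.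
Proof.
move=> Hxy Hyz; case: (two_step_dist Hxy Hyz) => [<-|H].
  rewrite /adj /hdist (_ : [set i | x i != x i] = set0) ?cards0 //.
  by apply/setP=> i; rewrite !inE eqxx.
by rewrite /adj H.
Qed.

Lemma dist2 x y z : adj x y -> adj y z -> x != z -> hdist x z = 2%N.
Proof.
move=> Hxy Hyz Nxz; case: (two_step_dist Hxy Hyz) => // E.
by rewrite E eqxx in Nxz.
Qed.

Lemma in_d x y z : hdist x z = 2%N -> adj x y -> adj y z ->
  exists a, (forall i, (x i != y i) = (i == a)) /\ x a != z a.
Proof.
move=> H2 Hxy Hyz; have [a [b [Ha Hb]]] := two_step Hxy Hyz.
exists a; split => //; rewrite Hb eqxx /=.
case: (eqVneq a b) => // Eab; exfalso.
move: H2; rewrite /hdist.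
have -> : [set i | x i != z i] = set0.
  by apply/setP => i; rewrite !inE Hb Eab addbb.
by rewrite cards0.
Qed.

Lemma common_nb x z y w u : hdist x z = 2%N ->
  adj x y -> adj y z -> adj x w -> adj w z -> adj x u -> adj u z -> y != w ->
  u = y \/ u = w.
Proof.
move=> H2 h1 h2 h3 h4 h5 h6 Nyw.
have [a [Ha Sa]] := in_d H2 h1 h2.
have [b [Hb Sb]] := in_d H2 h3 h4.
have [c [Hc Sc]] := in_d H2 h5 h6.
case: (eqVneq c a) => [Eca|Nca].
  by left; apply: (eq_from_d (x := x)) => i; rewrite Hc Ha Eca.
case: (eqVneq c b) => [Ecb|Ncb].
  by right; apply: (eq_from_d (x := x)) => i; rewrite Hc Hb Ecb.
have Nab : a != b.
  apply/eqP => Eab; move/eqP: Nyw; apply.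
  by apply: (eq_from_d (x := x)) => i; rewrite Hb Ha Eab.
exfalso; set S := [set i | x i != z i].
have aS : a \in S by rewrite inE.
have b1 : b \in S :\ a by rewrite !inE eq_sym Nab.
have c2 : c \in S :\ a :\ b by rewrite !inE Ncb Nca.
have := cardsD1 a S; rewrite aS.
have := cardsD1 b (S :\ a); rewrite b1.
have : (0 < #|S :\ a :\ b|)%N by apply/card_gt0P; exists c.
rewrite /S -/(hdist x z) H2 => P E1 E2.
rewrite E1 in E2; move: P E2; rewrite /= add1n.
case: #|_| => // n _ /eqP; by rewrite eqSS add1n.
Qed.

Lemma hdist_step x y n : hdist x y = n.+1 ->
  exists u, adj x u /\ hdist u y = n.
Proof.
move=> Hn.
have : (0 < #|[set i | x i != y i]|)%N by rewrite -/(hdist x y) Hn.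
move=> /card_gt0P [k]; rewrite inE => Hk.
exists [ffun i => if i == k then ~~ x i else x i]; split.
  rewrite /adj /hdist; apply/cards1P; exists k; apply/setP => i.
  by rewrite !inE ffunE; case: (i == k); case: (x i).
have := cardsD1 k [set i | x i != y i]; rewrite inE Hk -/(hdist x y) Hn add1n.
move=> [] ->; rewrite /hdist; apply: eq_card => i; rewrite !inE ffunE.
case: (eqVneq i k) => [->|] /=; last by [].
by move: Hk; case: (x k); case: (y k).
Qed.

End Cube.

Local Open Scope ring_scope.

Theorem lemma8p2 (R : realFieldType) (D : nat) (B : Xmat R D) :
  (1 <= D)%N -> symmetric_mat B -> A_like B ->
  (forall x y : vert D, B x x = B y y) /\
  (forall x z y w : vert D,
     hdist x z = 2%N -> adj x y -> adj y z -> adj x w -> adj w z -> y != w ->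
     B x y = B z w /\ B y z = B w x).
Proof.
move=> _ Bsym [Hcomm Hz].
have adjdiag x y : adj x y -> B x x = B y y.
  move=> Hxy.
  have L : xmul B (adjA R (D:=D)) x y = B x x.
    rewrite /xmul (bigD1 x) //= /adjA Hxy mulr1.
    rewrite big1 ?addr0 // => u Nux.
    case: (boolP (adj x u)) => Axu.
      by rewrite (negPf (no_tri (x:=u) (y:=x) (z:=y) _ _)) ?mulr0 // adj_sym.
    by rewrite Hz ?mul0r // eq_sym.
  have Rr : xmul (adjA R (D:=D)) B x y = B y y.
    rewrite /xmul (bigD1 y) //= /adjA Hxy mul1r.
    rewrite big1 ?addr0 // => u Nuy.
    case: (boolP (adj u y)) => Auy.
      by rewrite (negPf (no_tri (x:=x) (y:=y) (z:=u) _ _)) ?mul0r // adj_sym.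
    by rewrite Hz ?mulr0.
  by rewrite -L -Rr Hcomm.
split.
  move=> x y.
  have : exists n, hdist x y = n by eexists.
  move=> [n]; elim: n x => [|n IH] x Hn.
    by rewrite (hdist0 Hn).
  have [u [Axu Hu]] := hdist_step Hn.
  by rewrite (adjdiag _ _ Axu) (IH u Hu).
have key x z y w : hdist x z = 2%N -> adj x y -> adj y z -> adj x w -> adj w z ->
    y != w -> B x y + B x w = B y z + B w z.
  move=> H2 h1 h2 h3 h4 Nyw.
  have Nxz : x != z by apply/eqP => E; rewrite E /hdist in H2;
    move: H2; rewrite (_ : [set i | z i != z i] = set0) ?cards0 //;
    apply/setP => i; rewrite !inE eqxx.
  have Axz : adjA R x z = 0 by rewrite /adjA /adj H2.
  have L : xmul B (adjA R (D:=D)) x z = B x y + B x w.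
    rewrite /xmul (bigD1 y) //= (bigD1 w) /=; last by rewrite eq_sym Nyw.
    rewrite /adjA h2 h4 !mulr1 addrA.
    rewrite big1 ?addr0 // => u /andP [Nuy Nuw].
    case: (eqVneq u x) => [->|Nux]; first by rewrite /adj H2 mulr0.
    case: (boolP (adj x u)) => Axu; last by rewrite Hz ?mul0r // eq_sym.
    case: (boolP (adj u z)) => Auz; last by rewrite mulr0.
    by case: (common_nb H2 h1 h2 h3 h4 Axu Auz Nyw) => E; rewrite E eqxx in Nuy Nuw.
  have Rr : xmul (adjA R (D:=D)) B x z = B y z + B w z.
    rewrite /xmul (bigD1 y) //= (bigD1 w) /=; last by rewrite eq_sym Nyw.
    rewrite /adjA h1 h3 !mul1r addrA.
    rewrite big1 ?addr0 // => u /andP [Nuy Nuw].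
    case: (eqVneq u z) => [->|Nuz]; first by rewrite /adj H2 mul0r.
    case: (boolP (adj u z)) => Auz; last by rewrite Hz ?mulr0.
    case: (boolP (adj x u)) => Axu; last by rewrite mul0r.
    by case: (common_nb H2 h1 h2 h3 h4 Axu Auz Nyw) => E; rewrite E eqxx in Nuy Nuw.
  by rewrite -L -Rr Hcomm.
move=> x z y w H2 h1 h2 h3 h4 Nyw.
have Nxz : x != z by apply/eqP => E; move: H2; rewrite E /hdist
    (_ : [set i | z i != z i] = set0) ?cards0 //; apply/setP => i; rewrite !inE eqxx.
have H2' : hdist y w = 2%N by apply: (dist2 (y := x)) => //; rewrite adj_sym.
have e1 := key x z y w H2 h1 h2 h3 h4 Nyw.
have hyx : adj y x by rewrite adj_sym.
have hzw : adj z w by rewrite adj_sym.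
have e2 := key y w x z H2' hyx h3 h2 hzw Nxz.
move: e1 e2; rewrite ?(Bsym y x) ?(Bsym z w) ?(Bsym w x) ?(Bsym z y) ?(Bsym w y) ?(Bsym x w) => e1 e2.
set a := B x y in e1 e2 *; set b := B w x in e1 e2 *; set c := B y z in e1 e2 *; set d := B w z in e1 e2 *.
clearbody a b c d.
split; lra.
Qed.
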